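(* If an nfc-transducer $\mathcal{T}=(Q,V,\Delta,q_0)$ is consistent with a BPA system $\mathcal{G}=(V,\mathit{Act},\mathcal{R})$, then the equivalence $\equiv^{\mathcal{T}}$ on $V^*$, defined by $\alpha\equiv^{\mathcal{T}}\beta$ iff $\mathcal{T}_{q_0}(\alpha)=\mathcal{T}_{q_0}(\beta)$, is a branching bisimulation in $\mathcal{L}_\mathcal{G}$. Consequently $\mathcal{T}(\alpha)=\mathcal{T}(\beta)$ implies $\alpha\sim\beta$.
   Context: A BPA system $\mathcal{G}=(V,\mathit{Act},\mathcal{R})$: finite variables $V$, finite actions $\mathit{Act}$ (possibly containing silent $\tau$), rules $A\xrightarrow{a}\alpha$ ($A\in V,\alpha\in V^*$). LTS $\mathcal{L}_\mathcal{G}$ has states $V^*$ and transitions $A\beta\xrightarrow{a}\alpha\beta$ for rules $A\xrightarrow{a}\alpha$, $\beta\in V^*$. Branching bisimulation: a relation $\mathcal{B}$ such that for each $(s,t)\in\mathcal{B}$, each move $s\xrightarrow{a}s'$ is matched by either $a=\tau$ and $(s',t)\in\mathcal{B}$, or a path $t=t_0\xrightarrow{\tau}\cdots\xrightarrow{\tau}t_k\xrightarrow{a}t'$ with $(s',t')\in\mathcal{B}$ and $(s,t_i)\in\mathcal{B}$ for $i\in[1,k]$, and symmetrically for moves of $t$; $\sim$ is the largest branching bisimulation. Transducer $\mathcal{T}=(Q,V,\Delta,q_0)$, $\Delta:Q\times V\to Q\times V^*$, reading right to left: $q'\xleftarrow{A/\gamma}q$ means $\Delta(q,A)=(q',\gamma)$,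 extended by $q\xleftarrow{\varepsilon/\varepsilon}q$ and composition $q''\xleftarrow{\alpha A/\beta\gamma}q$ from $q'\xleftarrow{A/\gamma}q$, $q''\xleftarrow{\alpha/\beta}q'$. $\mathcal{T}_q(\alpha)$ is the output from $q$ on $\alpha$; $\mathcal{T}=\mathcal{T}_{q_0}$. $q$-normal forms: $\varepsilon$ or $A_k\cdots A_1$ with $q_k\xleftarrow{A_k/A_k}\cdots q_1\xleftarrow{A_1/A_1}q$. nfc-transducer: each $\mathcal{T}_q(A)$ is a $q$-normal form and $q'\xleftarrow{A/\gamma}q$ implies $q'\xleftarrow{\gamma/\gamma}q$. Long moves: $\alpha\overset{a}{\Rightarrow}_q\beta$ if either $a=\tau$ and $\beta=\mathcal{T}_q(\alpha)$, or $\alpha=\alpha_0\xrightarrow{\tau}\alpha_1\cdots\xrightarrow{\tau}\alpha_k\xrightarrow{a}\beta'$ in $\mathcal{L}_\mathcal{G}$ ($k\ge0$) with $\mathcal{T}_q(\alpha_0)=\cdots=\mathcal{T}_q(\alpha_k)$ and $\mathcal{T}_q(\beta')=\beta$. $\alpha_1\approx_q\alpha_2$ iff for all $a$, $\{\beta\mid\alpha_1\overset{a}{\Rightarrow}_q\beta\}=\{\beta\mid\alpha_2\overset{a}{\Rightarrow}_q\beta\}$. Consistency of $\mathcal{T}$ with $\mathcal{G}$: (1) $A\approx_{q_0}\varepsilon$ if $\mathcal{T}_{q_0}(A)=\varepsilon$; (2) $A\approx_q\mathcal{T}_q(A)$ if $\mathcal{T}_q(A)\ne\varepsilon$; (3)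 $AC\approx_qC$ if $\mathcal{T}_q(AC)=\mathcal{T}_q(C)=C$. *)

(* Defs.v *)
From mathcomp Require Import all_boot.
Set Implicit Arguments. Unset Strict Implicit. Unset Printing Implicit Defensive.

Record bpa (V Act : finType) := BPA {
  tau : Act;
  rules : seq (V * Act * seq V)   (* rule (A, a, alpha) means A --a--> alpha *)
}.

Definition step (V Act : finType) (G : bpa V Act) (s : seq V) (a : Act) (t : seq V) : Prop :=
  exists (A : V) (alpha beta : seq V),
    s = A :: beta /\ (A, a, alpha) \in rules G /\ t = alpha ++ beta.

Inductive taus_in (V Act : finType) (G : bpa V Act) (P : seq V -> Prop)
  : seq V -> seq V -> Prop :=
| taus_refl t : taus_in G P t t
| taus_cons t t1 tk : step G t (tau G) t1 -> P t1 -> taus_in G P t1 tk -> taus_in G P t tk.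

Definition branching_bisim (V Act : finType) (G : bpa V Act) (B : seq V -> seq V -> Prop) : Prop :=
  forall s t, B s t ->
    (forall a s', step G s a s' ->
        (a = tau G /\ B s' t) \/
        exists tk t', taus_in G (fun ti => B s ti) t tk /\ step G tk a t' /\ B s' t') /\
    (forall a t', step G t a t' ->
        (a = tau G /\ B s t') \/
        exists sk s', taus_in G (fun si => B si t) s sk /\ step G sk a s' /\ B s' t').

Definition bbisimilar (V Act : finType) (G : bpa V Act) (s t : seq V) : Prop :=
  exists B, branching_bisim G B /\ B s t.

Record transducer (V : finType) := Transducer {
  tQ : finType;
  tDelta : tQ -> V -> tQ * seq V;
  tq0 : tQ
}.

Section Trans.
Variables (V : finType) (T : transducer V).

(* run on a reversed word: the transducer reads right to left *)
Fixpoint run_rev (q : tQ T) (rw : seq V) : tQ T * seq V :=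
  match rw with
  | [::] => (q, [::])
  | A :: rw' =>
      let (q', g) := tDelta q A in
      let (q'', b) := run_rev q' rw' in (q'', b ++ g)
  end.

(* trans q alpha = (q'', beta) iff q'' <--alpha/beta-- q *)
Definition trans (q : tQ T) (alpha : seq V) : tQ T * seq V := run_rev q (rev alpha).

Definition tout (q : tQ T) (alpha : seq V) : seq V := (trans q alpha).2.

Fixpoint nf_rev (q : tQ T) (rw : seq V) : bool :=
  match rw with
  | [::] => true
  | A :: rw' => ((tDelta q A).2 == [:: A]) && nf_rev (tDelta q A).1 rw'
  end.
Definition is_normal (q : tQ T) (alpha : seq V) : bool := nf_rev q (rev alpha).

Definition nfc : Prop :=
  (forall q A, is_normal q (tout q [:: A])) /\
  (forall q A, trans q (tDelta q A).2 = tDelta q A).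

End Trans.

Section Consistency.
Variables (V Act : finType) (G : bpa V Act) (T : transducer V).

Inductive tstar (q : tQ T) : seq V -> seq V -> Prop :=
| tstar_refl a : tstar q a a
| tstar_cons a b c : step G a (tau G) b -> tout q a = tout q b -> tstar q b c -> tstar q a c.

Definition long_move (q : tQ T) (alpha : seq V) (a : Act) (beta : seq V) : Prop :=
  (a = tau G /\ beta = tout q alpha) \/
  exists ak b', tstar q alpha ak /\ step G ak a b' /\ tout q b' = beta.

Definition approx (q : tQ T) (a1 a2 : seq V) : Prop :=
  forall a beta, long_move q a1 a beta <-> long_move q a2 a beta.

Definition consistent : Prop :=
  (forall A, tout (tq0 T) [:: A] = [::] -> approx (tq0 T) [:: A] [::]) /\
  (forall q A, tout q [:: A] <> [::] -> approx q [:: A] (tout q [:: A])) /\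
  (forall q A C, tout q [:: A; C] = [:: C] -> tout q [:: C] = [:: C] ->
                 approx q [:: A; C] [:: C]).

End Consistency.

(* Main.v *)
Require Import Defs.
From mathcomp Require Import all_boot.
From Stdlib Require Import Setoid.
Set Implicit Arguments.

Lemma catIs_my (X : Type) (s s1 s2 : seq X) : s1 ++ s = s2 ++ s -> s1 = s2.
Proof.
move=> H.
have Hs : size s1 = size s2.
  have := congr1 size H; rewrite !size_cat => /eqP; rewrite eqn_add2r => /eqP //.
elim: s1 s2 H Hs => [|x s1 IH] [|y s2] //= H Hs.
case: H => -> H'; congr cons; apply: IH => //; by case: Hs.
Qed.
Arguments catIs_my {X s s1 s2}.

Section S.
Variables (V Act : finType) (G : bpa V Act) (T : transducer V).

Lemma run_rev_cons (q : tQ T) A rw :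
  run_rev q (A :: rw) = ((run_rev (tDelta q A).1 rw).1,
                         (run_rev (tDelta q A).1 rw).2 ++ (tDelta q A).2).
Proof. simpl. case: (tDelta q A) => q' g /=. by case: (run_rev q' rw). Qed.

Lemma run_rev_cat (q : tQ T) r1 r2 :
  run_rev q (r1 ++ r2) = ((run_rev (run_rev q r1).1 r2).1,
                          (run_rev (run_rev q r1).1 r2).2 ++ (run_rev q r1).2).
Proof.
elim: r1 q => [|A r1 IH] q.
  by rewrite /= cats0; case: (run_rev q r2).
rewrite cat_cons !run_rev_cons IH /=.
by rewrite catA.
Qed.

Lemma trans_cat (q : tQ T) a b :
  trans q (a ++ b) = ((trans (trans q b).1 a).1, (trans (trans q b).1 a).2 ++ (trans q b).2).
Proof. by rewrite /trans rev_cat run_rev_cat. Qed.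

Lemma tout_cat (q : tQ T) a b : tout q (a ++ b) = tout (trans q b).1 a ++ tout q b.
Proof. by rewrite /tout trans_cat. Qed.

Lemma trans_cat1 (q : tQ T) a b : (trans q (a ++ b)).1 = (trans (trans q b).1 a).1.
Proof. by rewrite trans_cat. Qed.

Lemma trans1 (q : tQ T) A : trans q [:: A] = tDelta q A.
Proof. rewrite /trans /= . by case: (tDelta q A). Qed.

Lemma tout_nil (q : tQ T) : tout q [::] = [::].
Proof. by []. Qed.
Lemma trans_nil (q : tQ T) : trans q [::] = (q, [::]).
Proof. by []. Qed.

Lemma nf_rev_rcons (q : tQ T) rw C :
  nf_rev q (rcons rw C) = nf_rev q rw && ((tDelta (run_rev q rw).1 C).2 == [:: C]).
Proof.
elim: rw q => [|A rw IH] q; first by rewrite /= andbT.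
rewrite rcons_cons run_rev_cons /= IH andbA //.
Qed.

Lemma normal_head (q : tQ T) C d :
  is_normal q (C :: d) -> tDelta (trans q d).1 C = ((trans q (C :: d)).1, [:: C]).
Proof.
rewrite /is_normal rev_cons nf_rev_rcons => /andP [_ /eqP H].
rewrite -cat1s trans_cat1 trans1.
rewrite /trans; case: (tDelta _ C) H => a b /= -> //.
Qed.

Lemma step_cat b d a x : step G b a x -> step G (b ++ d) a (x ++ d).
Proof.
move=> [A [al [be [-> [H ->]]]]]. exists A, al, (be ++ d). by rewrite catA.
Qed.

Lemma step_cat_inv B b d a w :
  step G ((B :: b) ++ d) a w -> exists x, step G (B :: b) a x /\ w = x ++ d.
Proof.
move=> [A [al [be [H [Hr ->]]]]]. case: H => ? ?; subst.
exists (al ++ b); split; last by rewrite catA.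
by exists A, al, b.
Qed.

Lemma tstar_tout (q : tQ T) u w : tstar G q u w -> tout q u = tout q w.
Proof. elim=> // a b c _ H _ IH. by rewrite H. Qed.

Lemma tstar_trans (q : tQ T) u v w : tstar G q u v -> tstar G q v w -> tstar G q u w.
Proof. elim=> // a b c H1 H2 _ IH H. apply: tstar_cons H1 H2 (IH H). Qed.

Lemma tstar_cat_inv (q : tQ T) d u w : tstar G q u w ->
  forall b, u = b ++ d -> tout (trans q d).1 b != [::] ->
  exists x, w = x ++ d /\ tstar G (trans q d).1 b x.
Proof.
elim=> [a|a b c Hs Heq Hst IH] bb Hu Hne.
  by exists bb; split => //; constructor.
case: bb Hu Hne => [|B bb] Hu Hne; first by rewrite tout_nil in Hne.
subst a. have [x1 [Hx1 Hb]] := step_cat_inv Hs. subst b.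
rewrite !tout_cat in Heq. have Heq' := catIs_my Heq.
have [x [-> Hx]] := IH x1 erefl ltac:(by rewrite -Heq').
exists x; split => //. exact: tstar_cons Hx1 Heq' Hx.
Qed.

Lemma tstar_cat (q : tQ T) d b x : tstar G (trans q d).1 b x -> tstar G q (b ++ d) (x ++ d).
Proof.
elim=> [a|a b' c Hs Heq _ IH]; first by constructor.
apply: tstar_cons (step_cat d Hs) _ IH. by rewrite !tout_cat Heq.
Qed.

Lemma char_lm (q : tQ T) d b a z : tout (trans q d).1 b != [::] ->
  long_move G q (b ++ d) a z <-> exists y, long_move G (trans q d).1 b a y /\ z = y ++ tout q d.
Proof.
move=> Hne; split.
- case=> [[-> ->]|[ak [b' [Hst [Hs <-]]]]].
    by exists (tout (trans q d).1 b); split; [left|rewrite tout_cat].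
  have [x [Hx Hst']] := (@tstar_cat_inv q d _ _ Hst b erefl Hne). subst ak.
  have Hxne : x != [::].
    by apply/eqP => Hx; move: Hne; rewrite (tstar_tout Hst') Hx tout_nil.
  clear Hst; case: x Hxne Hs Hst' => // X x _ Hs Hst'.
  have [x' [Hx' ->]] := step_cat_inv Hs.
  exists (tout (trans q d).1 x'); split; last by rewrite tout_cat.
  right. by exists (X :: x), x'.
- move=> [y [[[-> ->]|[ak [b' [Hst [Hs <-]]]]] ->]].
    by left; rewrite tout_cat.
  right; exists (ak ++ d), (b' ++ d); split; first exact: tstar_cat.
  by split; [apply: step_cat|rewrite tout_cat].
Qed.

Lemma approx_refl (q : tQ T) a : approx G q a a.
Proof. by []. Qed.
Lemma approx_sym (q : tQ T) a b : approx G q a b -> approx G q b a.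
Proof. move=> H x y. by split => /H. Qed.
Lemma approx_trans (q : tQ T) a b c : approx G q a b -> approx G q b c -> approx G q a c.
Proof. move=> H1 H2 x y. by split => [/H1/H2|/H2/H1]. Qed.

Lemma tout_transfer (q : tQ T) b b' x y :
  tout q b = tout q b' -> (trans q b).1 = (trans q b').1 ->
  tout q (x ++ b) = tout q (y ++ b) -> tout q (x ++ b') = tout q (y ++ b').
Proof. move=> H1 H2. by rewrite !tout_cat H1 H2. Qed.

Lemma tstar_split (q : tQ T) b b' u w :
  tout q b = tout q b' -> (trans q b).1 = (trans q b').1 ->
  tstar G q u w -> forall a, u = a ++ b ->
  (exists x, w = x ++ b /\ x != [::] /\ tstar G q (a ++ b') (x ++ b')) \/
  (tstar G q (a ++ b') b' /\ tstar G q b w).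
Proof.
move=> H1 H2; elim=> [u0|u0 v w0 Hstep Heq Hst IH] a Hu.
  case: a Hu => [|A a] ->; first by right; split; constructor.
  by left; exists (A :: a); split; last split; last constructor.
case: a Hu => [|A a] Hu.
  right; split; first constructor.
  by rewrite Hu in Hstep Heq; exact: tstar_cons Hstep Heq Hst.
subst u0. have [x1 [Hx1 Hv]] := step_cat_inv Hstep. subst v.
have Heq' := @tout_transfer q b b' _ _ H1 H2 Heq.
case: (IH x1 erefl) => [[x [-> [Hx Hst']]]|[Hst1 Hst2]].
  left; exists x; split => //; split => //.
  exact: tstar_cons (step_cat b' Hx1) Heq' Hst'.
right; split => //. exact: tstar_cons (step_cat b' Hx1) Heq' Hst1.
Qed.

Lemma congL_dir (q : tQ T) a b b' x z :
  approx G q b b' -> tout q b = tout q b' -> (trans q b).1 = (trans q b').1 ->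
  long_move G q (a ++ b) x z -> long_move G q (a ++ b') x z.
Proof.
move=> Hap H1 H2 [[-> ->]|[ak [c [Hst [Hs <-]]]]].
  by left; split => //; rewrite !tout_cat H1 H2.
case: (@tstar_split q b b' _ _ H1 H2 Hst a erefl) => [[y [Hy [Hyne Hst']]]|[Hst1 Hst2]].
  subst ak. clear Hst. case: y Hyne Hs Hst' => // Y y _ Hs Hst'.
  have [y' [Hy' ->]] := step_cat_inv Hs.
  right; exists ((Y :: y) ++ b'), (y' ++ b'); split => //; split; first exact: step_cat.
  by rewrite !tout_cat H1 H2.
have : long_move G q b x (tout q c) by right; exists ak, c.
move/Hap => [[-> ->]|[ak' [c' [Hst' [Hs' <-]]]]].
  by left; split => //; rewrite (tstar_tout Hst1).
right; exists ak', c'; split => //. exact: tstar_trans Hst1 Hst'.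
Qed.

Lemma congL (q : tQ T) a b b' :
  approx G q b b' -> tout q b = tout q b' -> (trans q b).1 = (trans q b').1 ->
  approx G q (a ++ b) (a ++ b').
Proof.
move=> Hap H1 H2 x z; split; first exact: congL_dir.
apply: congL_dir => //; exact: approx_sym.
Qed.

Lemma char_approx (q : tQ T) d b b' :
  tout (trans q d).1 b != [::] -> tout (trans q d).1 b' != [::] ->
  approx G (trans q d).1 b b' -> approx G q (b ++ d) (b' ++ d).
Proof.
move=> Hb Hb' Hap x z; rewrite !char_lm //.
by split => [[y [/Hap H ->]]|[y [/Hap H ->]]]; exists y.
Qed.

Lemma cat_nil2 (X : Type) (s1 s2 : seq X) : s1 ++ s2 = [::] -> s1 = [::] /\ s2 = [::].
Proof. by case: s1 => //; case: s2. Qed.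

Lemma taus_in_mono (P Q : seq V -> Prop) u w :
  taus_in G P u w -> (forall x, P x -> Q x) -> taus_in G Q u w.
Proof.
move=> H HPQ; elim: H => [a|a b c Hs HP _ IH]; first by constructor.
exact: taus_cons Hs (HPQ _ HP) IH.
Qed.

Hypothesis Hnfc : nfc T.
Hypothesis Hcons : consistent G T.

Lemma nfc2' (q : tQ T) A : trans q (tout q [:: A]) = trans q [:: A].
Proof. rewrite /tout trans1. exact: Hnfc.2. Qed.

Lemma erase_state (q : tQ T) A : tout q [:: A] = [::] -> (trans q [:: A]).1 = q.
Proof. move=> H. by rewrite -nfc2' H. Qed.

Lemma idem (a : seq V) : forall q : tQ T,
  tout q (tout q a) = tout q a /\ (trans q (tout q a)).1 = (trans q a).1.
Proof.
elim/last_ind: a => [|a A IH] q; first by [].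
rewrite -cats1 tout_cat !trans_cat1 tout_cat (nfc2' q A).
have [I1 I2] := IH (trans q [:: A]).1.
rewrite I1 I2; split => //.
rewrite /tout in I1 *; by rewrite (nfc2' q A).
Qed.

Lemma lemE (a : seq V) : forall (qC : tQ T) C,
  tout qC [:: C] = [:: C] -> tout (trans qC [:: C]).1 a = [::] ->
  approx G qC (a ++ [:: C]) [:: C].
Proof.
elim/last_ind: a => [|a B IH] qC C HC Ha; first by [].
move: Ha; rewrite -cats1 tout_cat => /cat_nil2 [Ha HB].
have HsB := erase_state _ _ HB. rewrite HsB in Ha.
have H3 : approx G qC [:: B; C] [:: C].
  apply: Hcons.2.2 => //.
  by rewrite -cat1s tout_cat HB HC.
have H4 := congL a H3.
rewrite -catA /=; apply: approx_trans (IH qC C HC Ha).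
apply: H4; first by rewrite -cat1s tout_cat HB HC.
by rewrite -cat1s trans_cat1 HsB.
Qed.

Lemma erase_approx (q : tQ T) b d :
  (trans q d).1 = q -> tout q d = [::] -> tout q b != [::] -> approx G q (b ++ d) b.
Proof.
move=> Hs Hd Hb x z. have Hb' : tout (trans q d).1 b != [::] by rewrite Hs.
rewrite (@char_lm q d b x z Hb') Hs Hd; split.
  by move=> [y [H ->]]; rewrite cats0.
by move=> H; exists z; rewrite cats0.
Qed.

Lemma mainH (a : seq V) : forall q : tQ T,
  (tout q a != [::] \/ q = tq0 T) -> approx G q a (tout q a).
Proof.
elim/last_ind: a => [|a A IH] q Hq; first by [].
rewrite -cats1 in Hq *. rewrite tout_cat.
case Hg: (tout q [:: A]) => [|C d].
- have Hst := erase_state _ _ Hg. rewrite Hst cats0.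
  case Ha: (tout q a == [::]).
  + move/eqP: Ha => Ha.
    have Hq0 : q = tq0 T.
      case: Hq => // /eqP []; by rewrite tout_cat Hst Hg Ha.
    subst q. rewrite Ha.
    have H1 := Hcons.1 A Hg.
    have H2 := congL a H1 ltac:(by rewrite Hg) ltac:(by rewrite Hst).
    rewrite cats0 in H2. apply: approx_trans H2 _.
    by rewrite -Ha; apply: IH; right.
  + have Ha' : tout q a != [::] by rewrite Ha.
    exact: approx_trans (@erase_approx q a [:: A] Hst Hg Ha') (IH q (or_introl Ha')).
- have Hne : tout q [:: A] <> [::] by rewrite Hg.
  have H2 := Hcons.2.1 q A Hne. rewrite Hg in H2.
  have Hn2 := nfc2' q A. rewrite Hg in Hn2.
  have H3 := congL a H2 ltac:(by rewrite /tout Hn2) ltac:(by rewrite Hn2).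
  apply: approx_trans H3 _.
  set q' := (trans q [:: A]).1.
  have Hgs : (trans q (C :: d)).1 = q' by rewrite Hn2.
  case Ha: (tout q' a == [::]).
  + move/eqP: Ha => Ha. rewrite Ha /=.
    have Hnorm := Hnfc.1 q A. rewrite Hg in Hnorm.
    have Hh := normal_head _ _ _ Hnorm. rewrite Hgs in Hh.
    set qC := (trans q d).1 in Hh.
    have HtC : trans qC [:: C] = (q', [:: C]) by rewrite trans1.
    have HE := @lemE a qC C ltac:(by rewrite /tout HtC) ltac:(by rewrite HtC).
    have HH := @char_approx q d (a ++ [:: C]) [:: C]
      ltac:(by rewrite -/qC tout_cat HtC /= Ha /tout HtC) ltac:(by rewrite -/qC /tout HtC) HE.
    by rewrite -catA cat1s in HH.
  + have Ha' : tout q' a != [::] by rewrite Ha.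
    have IHa := IH q' (or_introl Ha').
    have [I1 _] := idem a q'.
    apply: char_approx; rewrite Hgs //. by rewrite I1.
Qed.

Lemma tstar_taus (q : tQ T) u w : tstar G q u w ->
  forall c, tout q u = c -> taus_in G (fun x => c = tout q x) u w.
Proof.
elim=> [a|a b c' Hs Heq _ IH] c Hc; first by constructor.
apply: taus_cons Hs _ (IH c _); by rewrite -Heq.
Qed.

Lemma match_move (u v : seq V) a u' :
  tout (tq0 T) u = tout (tq0 T) v -> step G u a u' ->
  (a = tau G /\ tout (tq0 T) u' = tout (tq0 T) v) \/
  exists vk v', taus_in G (fun x => tout (tq0 T) u = tout (tq0 T) x) v vk /\
     step G vk a v' /\ tout (tq0 T) u' = tout (tq0 T) v'.
Proof.
move=> Huv Hs.
have Hlm : long_move G (tq0 T) u a (tout (tq0 T) u').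
  by right; exists u, u'; split => //; constructor.
have Hu := mainH u (or_intror erefl).
have Hv := mainH v (or_intror erefl).
rewrite Huv in Hu.
move: Hlm => /Hu /Hv [[-> ->]|[vk [v' [Hst [Hs' Hout]]]]].
  by left.
right; exists vk, v'; split; last by split.
apply: tstar_taus Hst _ _. by [].
Qed.

End S.

Theorem lemma4p3 (V Act : finType) (G : bpa V Act) (T : transducer V) :
  nfc T -> consistent G T ->
  branching_bisim G (fun alpha beta => tout (tq0 T) alpha = tout (tq0 T) beta) /\
  (forall alpha beta, tout (tq0 T) alpha = tout (tq0 T) beta -> bbisimilar G alpha beta).
Proof.
move=> Hn Hc.
have Hb : branching_bisim G (fun alpha beta => tout (tq0 T) alpha = tout (tq0 T) beta).
  move=> s t Hst; split.
  - move=> a s' Hs. case: (@match_move _ _ _ _ Hn Hc _ _ _ _ Hst Hs) => [[-> H]|[tk [t' [H1 [H2 H3]]]]].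
      by left.
    by right; exists tk, t'.
  - move=> a t' Ht. case: (@match_move _ _ _ _ Hn Hc _ _ _ _ (esym Hst) Ht) => [[-> H]|[sk [s' [H1 [H2 H3]]]]].
      by left; split => //; rewrite -H.
    right; exists sk, s'; split; last by split.
    apply: (@taus_in_mono _ _ G _ _ _ _ H1) => x H. by rewrite H.
split => // a b H. by exists (fun alpha beta => tout (tq0 T) alpha = tout (tq0 T) beta).
Qed.
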